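(* Let $\Gamma,T,\ast$ and $W$ be as in the context. Then $W$ has no non-stationary closed paths; that is, there is no sequence of $p$-cells $\sigma_0,\sigma_1,\dots,\sigma_r$ of $\mathcal{UD}^n\Gamma$ with $\sigma_r=\sigma_0$, $\sigma_1\ne\sigma_0$, such that for each $i$, if $W(\sigma_i)$ is undefined then $\sigma_{i+1}=\sigma_i$, and otherwise $\sigma_{i+1}\neq\sigma_i$ and $\sigma_{i+1}$ is a face of $W(\sigma_i)$. Consequently $W$ is a discrete gradient vector field on $\mathcal{UD}^n\Gamma$.
   Context: $\Gamma$ is a finite connected graph and $n\ge1$; $d(v)$ is the degree of $v$. $\mathcal{UD}^n\Gamma$ is the cell complex whose cells are unordered $n$-element sets $c=\{c_1,\dots,c_n\}$ where each $c_i$ is a vertex or an edge of $\Gamma$ and the closed sets $c_i$ are pairwise disjoint; the dimension of $c$ is the number of edges in it, and faces are obtained by replacing edges by endpoints. Fix a maximal tree $T$ of $\Gamma$ and a vertex $\ast$ of degree $1$ in $T$. For vertices $v_1,v_2$, $v_1\wedge v_2$ is the endpoint other than $\ast$ of $[\ast,v_1]\cap[\ast,v_2]$ (geodesics in $T$), or $\ast$ if this is $\{\ast\}$. Directions (edges) at each vertex $v$ are labelled $0,\dots,d(v)-1$, label $0$ for the edge of $T$ towards $\ast$ (the direction from $\ast$ in $T$ gets label $1$); $g(v_1,v_2)$ is the label of the direction from $v_1$ on the $T$-geodesic to $v_2$, and $g(v,v)=0$. Order: $v_1\le v_2$ iff, with $v_3=v_1\wedge v_2$, $v_3=v_1$ or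 ($v_3\ne v_1$ and $g(v_3,v_1)<g(v_3,v_2)$); this is a linear order. For an edge $e$, $\iota(e)\ge\tau(e)$ are its endpoints; for $v\ne\ast$, $e(v)$ is the edge of $T$ at $v$ in direction $0$. A vertex $v\neq\ast$ of a cell $c$ is unblocked in $c$ if $e(v)$ is disjoint from every element of $c$ other than $v$; then the elementary reduction of $c$ from $v$ replaces $v$ by $e(v)$. Otherwise (and always for $v=\ast$) $v$ is blocked. The principal reduction of $c$ is the elementary reduction from the smallest unblocked vertex of $c$ (if any). Define $W$: for a $0$-cell $c$, $W(c)$ is its principal reduction if it exists; for $i>0$ and an $i$-cell $c$, $W(c)$ is its principal reduction if this exists and $c$ is not in the image of $W$ on $(i-1)$-cells; otherwise undefined. A discrete gradient vector field is an injective such assignment $W$ (from $i$-cells to $(i+1)$-cells having them as regular faces, with image and domain disjoint) admitting no non-stationary closed paths. *)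

(* Defs.v *)
From mathcomp Require Import all_boot.

Section UD.
Variables (V E : finType) (src tgt : E -> V).

(* A direction is an edge together with the endpoint it leaves from:
   (e,false) leaves src e towards tgt e, (e,true) leaves tgt e towards src e.
   A loop gives two directions at its vertex. *)
Definition dstart (d : E * bool) : V := if d.2 then tgt d.1 else src d.1.
Definition dend (d : E * bool) : V := if d.2 then src d.1 else tgt d.1.
Definition dirs_at (v : V) : {set E * bool} := [set d | dstart d == v].
Definition deg (v : V) : nat := #|dirs_at v|.

Fixpoint walk (A : {set E}) (a b : V) (ds : seq (E * bool)) : bool :=
  match ds with
  | [::] => a == b
  | d :: ds' => [&& d.1 \in A, dstart d == a & walk A (dend d) b ds']
  end.
Definition wverts (a : V) (ds : seq (E * bool)) : seq V := a :: map dend ds.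
(* simple path (geodesic when A is a tree) from a to b *)
Definition geod (A : {set E}) (a b : V) (ds : seq (E * bool)) : bool :=
  walk A a b ds && uniq (wverts a ds).
Definition is_cycle (A : {set E}) (ds : seq (E * bool)) : bool :=
  match ds with
  | [::] => false
  | d :: _ => [&& walk A (dstart d) (dstart d) ds, uniq (map fst ds)
                 & uniq (map dend ds)]
  end.
Definition connected (A : {set E}) : Prop :=
  forall a b : V, exists ds, walk A a b ds.
Definition spanning_tree (T : {set E}) : Prop :=
  connected T /\ forall ds, ~~ is_cycle T ds.

Variables (T : {set E}) (star : V) (lab : E * bool -> nat).

(* the labelling of directions: at each v <> star a bijection from the
   directions at v onto {0,..,d(v)-1} with 0 on the T-direction towards star;
   at star the T-direction gets label 1. *)
Definition valid_lab : Prop :=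
  [/\ forall v, v != star ->
        {in dirs_at v &, injective lab} /\ (forall d, d \in dirs_at v -> lab d < deg v),
      {in dirs_at star &, injective lab},
      (forall v d ds, v != star -> geod T v star (d :: ds) -> lab d = 0)
    & (forall d, dstart d = star -> d.1 \in T -> lab d = 1)].

Definition is_meet (v1 v2 w : V) : Prop :=
  exists ds1 ds2 dsw, [/\ geod T star v1 ds1, geod T star v2 ds2, geod T star w dsw
    & forall x, (x \in wverts star ds1) && (x \in wverts star ds2)
                = (x \in wverts star dsw)].

Definition gval (v1 v2 : V) (k : nat) : Prop :=
  (v1 = v2 /\ k = 0) \/ exists d ds, geod T v1 v2 (d :: ds) /\ lab d = k.

Definition vle (v1 v2 : V) : Prop :=
  exists v3, is_meet v1 v2 v3 /\
    (v3 = v1 \/ (v3 <> v1 /\ exists k1 k2, [/\ gval v3 v1 k1, gval v3 v2 k2 & k1 < k2])).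

(* cells of UD^n Gamma: sets of vertices/edges *)
Definition cl (x : V + E) : {set V} :=
  match x with inl v => [set v] | inr e => [set src e; tgt e] end.
Definition is_cell (n : nat) (c : {set V + E}) : Prop :=
  #|c| = n /\ forall x y, x \in c -> y \in c -> x != y -> [disjoint cl x & cl y].
Definition dim (c : {set V + E}) : nat := #|[set e : E | inr e \in c]|.

Definition face (c' c : {set V + E}) : Prop :=
  exists (S : {set E}) (b : E -> bool),
    (forall e, e \in S -> inr e \in c) /\
    c' = (c :\: [set (inr e : V + E) | e in S]) :|: [set (inl (dstart (e, b e)) : V + E) | e in S].

Definition replace_by (c : {set V + E}) (d : E * bool) : {set V + E} :=
  (c :\ inr d.1) :|: [set inl (dstart d)].
Definition regular_face (c' c : {set V + E}) : Prop :=
  #|[set d : E * bool | (inr d.1 \in c) && (c' == replace_by c d)]| = 1.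

Definition ev (v : V) (e : E) : Prop :=
  exists d, [/\ dstart d = v, lab d = 0, d.1 \in T & d.1 = e].
Definition unblocked (c : {set V + E}) (v : V) (e : E) : Prop :=
  [/\ v != star, inl v \in c, ev v e
    & forall x, x \in c -> x != inl v -> [disjoint cl (inr e) & cl x]].
Definition elred (c : {set V + E}) (v : V) (e : E) : {set V + E} :=
  (c :\ inl v) :|: [set inr e].
Definition principal (c c' : {set V + E}) : Prop :=
  exists v e, [/\ unblocked c v e, (forall w f, unblocked c w f -> vle v w)
                & c' = elred c v e].

Fixpoint Wi (n i : nat) (c c' : {set V + E}) : Prop :=
  [/\ is_cell n c, dim c = i, principal c c' &
     match i with
     | 0 => True
     | j.+1 => ~ exists c0, Wi n j c0 c
     end].
(* W c c' : W(c) is defined and equals c' *)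
Definition W (n : nat) (c c' : {set V + E}) : Prop := Wi n (dim c) c c'.

End UD.
Arguments dstart : clear implicits.
Arguments connected : clear implicits.
Arguments spanning_tree : clear implicits.
Arguments valid_lab : clear implicits.
Arguments W : clear implicits.

Section DGVF.
Variables (V E : finType) (src tgt : E -> V) (n : nat).
(* a partial assignment on cells of UD^n Gamma given as a relation R c c' *)
Variable R : {set V + E} -> {set V + E} -> Prop.

Definition wstep (s s' : {set V + E}) : Prop :=
  ((forall t, ~ R s t) /\ s' = s) \/
  (exists t, [/\ R s t, s' <> s & @face V E src tgt s' t]).

Definition nonstat_closed_path : Prop :=
  exists (p r : nat) (s : nat -> {set V + E}),
    [/\ 0 < r,
        (forall i, i <= r -> @is_cell V E src tgt n (s i) /\ @dim V E (s i) = p),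
        s r = s 0, s 1 <> s 0
      & forall i, i < r -> wstep (s i) (s i.+1)].

Definition dgvf : Prop :=
  [/\ (forall c c', R c c' ->
         [/\ @is_cell V E src tgt n c, @is_cell V E src tgt n c', @dim V E c' = (@dim V E c).+1
           & @regular_face V E src tgt c c']),
      (forall c c1 c2, R c c1 -> R c c2 -> c1 = c2),
      (forall c1 c2 c', R c1 c' -> R c2 c' -> c1 = c2),
      (forall a b c, R a b -> ~ R b c)
    & ~ nonstat_closed_path].
End DGVF.
Arguments wstep : clear implicits.
Arguments nonstat_closed_path : clear implicits.
Arguments dgvf : clear implicits.

(* Main.v *)
Require Import Defs.
From mathcomp Require Import all_boot.
From Stdlib Require Import Classical.
From mathcomp Require Import zify.
Set Implicit Arguments. Unset Strict Implicit. Unset Printing Implicit Defensive.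

Section Walks.
Variables (V E : finType) (src tgt : E -> V).
Local Notation D := (E * bool)%type.
Local Notation ds_ := (dstart V E src tgt).
Local Notation de := (dend V E src tgt).
Local Notation walk := (walk V E src tgt).
Local Notation geod := (geod V E src tgt).
Local Notation wverts := (wverts V E src tgt).

Definition flipd (d : D) : D := (d.1, ~~ d.2).
Definition rf (ds : seq D) := rev (map flipd ds).
Definition lastv (a : V) (ds : seq D) := last a (map de ds).

Lemma ds_flip d : ds_ (flipd d) = de d.
Proof. by case: d => e [] /=; rewrite /dstart /dend. Qed.
Lemma de_flip d : de (flipd d) = ds_ d.
Proof. by case: d => e [] /=; rewrite /dstart /dend. Qed.
Lemma flipK : involutive flipd.
Proof. by case=> e b; rewrite /flipd /= negbK. Qed.

Lemma wverts_cons a d ds : wverts a (d :: ds) = a :: wverts (de d) ds.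
Proof. by []. Qed.

Lemma walk_cat A a b s1 s2 :
  walk A a b (s1 ++ s2) = walk A a (lastv a s1) s1 && walk A (lastv a s1) b s2.
Proof.
elim: s1 a => [|d s1 IH] a /=; first by rewrite eqxx.
by rewrite IH /lastv /= !andbA.
Qed.

Lemma walk_last A a b ds : walk A a b ds -> b = lastv a ds.
Proof.
elim: ds a => [|d ds IH] a /=; first by move/eqP.
by case/and3P=> _ _ /IH.
Qed.

Lemma wverts_cat a s1 s2 : wverts a (s1 ++ s2) = wverts a s1 ++ map de s2.
Proof. by rewrite /wverts map_cat. Qed.

Lemma lastv_cat a s1 s2 : lastv a (s1 ++ s2) = lastv (lastv a s1) s2.
Proof. by rewrite /lastv map_cat last_cat. Qed.

Lemma lastv_in a ds : lastv a ds \in wverts a ds.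
Proof. by rewrite /lastv /wverts mem_last. Qed.

Lemma walk_starts A a b ds : walk A a b ds -> a :: map de ds = rcons (map ds_ ds) b.
Proof.
elim: ds a => [|d ds IH] a /=; first by move/eqP->.
by case/and3P=> _ /eqP-> /IH ->.
Qed.

Lemma walk_rf A a b ds : walk A a b ds -> walk A b a (rf ds).
Proof.
elim: ds a => [|d ds IH] a /=; first by move/eqP->; rewrite /rf /= eqxx.
case/and3P=> dA /eqP da w.
rewrite /rf /= rev_cons -cats1 walk_cat -/(rf ds) -(walk_last (IH _ w)) (IH _ w) /=.
by rewrite dA ds_flip eqxx de_flip da eqxx.
Qed.

Lemma wverts_rf A a b ds : walk A a b ds -> wverts b (rf ds) = rev (wverts a ds).
Proof.
move=> w; rewrite /wverts (walk_starts w) rev_rcons /rf map_rev -map_comp.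
by congr (_ :: rev _); apply: eq_map => d /=; rewrite de_flip.
Qed.

Lemma geod_rf A a b ds : geod A a b ds -> geod A b a (rf ds).
Proof.
case/andP=> w u; apply/andP; split; first exact: walk_rf.
by rewrite (wverts_rf w) rev_uniq.
Qed.

Lemma rfK : involutive rf.
Proof. by move=> ds; rewrite /rf map_rev revK -map_comp map_id_in // => d _ /=; rewrite flipK. Qed.

Lemma size_rf ds : size (rf ds) = size ds.
Proof. by rewrite /rf size_rev size_map. Qed.

Lemma geod_catl A a b s1 s2 : geod A a b (s1 ++ s2) ->
  geod A a (lastv a s1) s1 /\ geod A (lastv a s1) b s2.
Proof.
case/andP; rewrite walk_cat wverts_cat => /andP[w1 w2] u.
rewrite /geod w1 w2; split; first by rewrite (cat_uniq _ _) in u; case/and3P: u.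
rewrite cat_uniq in u; case/and3P: u => _ hn u2.
rewrite /wverts /= u2 andbT; apply/negP=> hin.
by move/negP: hn; apply; apply/hasP; exists (lastv a s1) => //; apply: lastv_in.
Qed.

Lemma geod_catr A a c b s1 s2 : geod A a c s1 -> geod A c b s2 ->
  (forall x, x \in wverts a s1 -> x \in map de s2 -> False) -> geod A a b (s1 ++ s2).
Proof.
case/andP=> w1 u1 /andP[w2 u2] H.
have ec := walk_last w1.
rewrite /geod walk_cat -ec w1 w2 wverts_cat cat_uniq u1 /=.
rewrite /wverts /= in u2; case/andP: u2 => _ ->; rewrite andbT.
by apply/hasP=> -[x xin xm]; apply: (H x).
Qed.

Lemma mem_wverts_split a x ds : x \in wverts a ds ->
  exists s1 s2, ds = s1 ++ s2 /\ lastv a s1 = x.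
Proof.
elim: ds a => [|d ds IH] a.
  by rewrite /wverts /= inE => /eqP->; exists [::], [::].
rewrite wverts_cons inE => /orP[/eqP->|]; first by exists [::], (d :: ds).
by case/IH=> s1 [s2 [-> <-]]; exists (d :: s1), s2.
Qed.

Lemma shorten A a b ds : walk A a b ds -> exists ds', geod A a b ds'.
Proof.
elim: ds a => [|d ds IH] a /=.
  by move=> h; exists [::]; rewrite /geod /= h.
case/and3P=> dA /eqP da /IH [q /andP[wq uq]].
case ain: (a \in wverts (de d) q).
  case: (mem_wverts_split ain) => s1 [s2 [qe <-]].
  rewrite qe in wq uq; have := (@geod_catl A (de d) b s1 s2); rewrite /geod wq uq.
  by case=> // _ g; exists s2.
exists (d :: q); rewrite /geod /= dA da eqxx wq /=.
by rewrite /wverts /= in ain uq *; rewrite ain uq.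
Qed.

End Walks.



Fixpoint lexle (s t : seq nat) : bool :=
  match s, t with
  | [::], _ => true
  | _ :: _, [::] => false
  | x :: s', y :: t' => (x < y) || ((x == y) && lexle s' t')
  end.

Lemma lexle_refl s : lexle s s.
Proof. by elim: s => //= x s ->; rewrite eqxx orbT. Qed.

Lemma lexle_trans s t u : lexle s t -> lexle t u -> lexle s u.
Proof.
elim: s t u => [|x s IH] [|y t] [|z u] //=.
case/orP=> [xy|/andP[/eqP<- st]]; case/orP=> [yz|/andP[/eqP<- tu]].
- by rewrite (ltn_trans xy yz).
- by rewrite xy.
- by rewrite yz.
- by rewrite eqxx (IH _ _ st tu) orbT.
Qed.

Lemma lexle_total s t : lexle s t || lexle t s.
Proof.
elim: s t => [|x s IH] [|y t] //=.
case: (ltngtP x y) => //= ->; by rewrite eqxx /= IH.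
Qed.

Lemma lexle_antisym s t : lexle s t -> lexle t s -> s = t.
Proof.
elim: s t => [|x s IH] [|y t] //=.
case/orP=> [xy|/andP[/eqP<- st]].
  by rewrite ltnNge (ltnW xy) /= eq_sym (ltn_eqF xy).
by rewrite ltnn eqxx /= => /(IH _ st) ->.
Qed.

Lemma lexle_cat u s t : lexle (u ++ s) (u ++ t) = lexle s t.
Proof. by elim: u => //= x u ->; rewrite ltnn eqxx. Qed.

Section Tree.
Variables (V E : finType) (src tgt : E -> V) (T : {set E}) (star : V)
  (lab : E * bool -> nat).
Local Notation D := (E * bool)%type.
Local Notation ds_ := (dstart V E src tgt).
Local Notation de := (dend V E src tgt).
Local Notation walk := (walk V E src tgt).
Local Notation geod := (geod V E src tgt).
Local Notation wverts := (wverts V E src tgt).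
Local Notation lastv := (lastv src tgt).
Local Notation rf := (@rf E).

Hypothesis Tconn : connected V E src tgt T.
Hypothesis Hlab : valid_lab V E src tgt T star lab.

Lemma Hinj v d d' : ds_ d = v -> ds_ d' = v -> lab d = lab d' -> d = d'.
Proof.
case: Hlab => H1 H2 _ _ e1 e2 el.
have m1 : d \in dirs_at V E src tgt v by rewrite inE e1.
have m2 : d' \in dirs_at V E src tgt v by rewrite inE e2.
case: (eqVneq v star) => [vs|ns].
  by rewrite vs in m1 m2; exact: H2 m1 m2 el.
by case: (H1 v ns) => Hi _; exact: Hi m1 m2 el.
Qed.

Lemma Hup v d ds : v != star -> geod T v star (d :: ds) -> lab d = 0.
Proof. by case: Hlab => _ _ H _; apply: H. Qed.

Lemma Hstar d : ds_ d = star -> d.1 \in T -> lab d = 1.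
Proof. by case: Hlab => _ _ _ H; apply: H. Qed.

Lemma geod_loop A a ds : geod A a a ds -> ds = [::].
Proof.
case: ds => // d ds /andP[w u]; have := walk_last w.
rewrite /wverts /= in u; case/andP: u => /negP nin _ ea.
by exfalso; apply: nin; rewrite [X in X \in _]ea /lastv /= mem_last.
Qed.

Lemma exP v : exists ds, geod T star v ds.
Proof. by case: (Tconn star v) => ds /shorten. Qed.

Definition P v := xchoose (exP v).
Lemma geodP v : geod T star v (P v).
Proof. exact: xchooseP. Qed.
Definition h v := size (P v).

Lemma Ustar p : forall v q, geod T v star p -> geod T v star q -> p = q.
Proof.
elim: p => [|d p IH] v q.
  by move=> /andP[/eqP-> _] /geod_loop.
move=> gp; have gp0 := gp; case/andP: gp0 => /= /and3P[_ /eqP dv _] _.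
case: (eqVneq v star) => [vs|ns]; first by rewrite vs in gp; move: (geod_loop gp).
case: q => [|d' q] gq; first by case/andP: gq => /= /eqP vs; rewrite vs eqxx in ns.
have gq0 := gq; case/andP: gq0 => /= /and3P[_ /eqP dv' _] _.
have ee : d = d' by apply: (Hinj dv dv'); rewrite (Hup ns gp) (Hup ns gq).
subst d'; congr (_ :: _).
have := (@geod_catl _ _ src tgt T v star [:: d] p); case=> // _ g1.
have := (@geod_catl _ _ src tgt T v star [:: d] q); case=> // _ g2.
exact: IH g1 g2.
Qed.

Lemma Ugeod v p : geod T star v p -> p = P v.
Proof.
move=> g; apply: (inv_inj (@rfK E)).
exact: (Ustar (geod_rf g) (geod_rf (geodP v))).
Qed.

Lemma P_last v : lastv star (P v) = v.
Proof. by have /andP[/walk_last/esym e _] := geodP v. Qed.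

Lemma P_inj x y : P x = P y -> x = y.
Proof. by move=> e; rewrite -(P_last x) -(P_last y) e. Qed.

Lemma P_star : P star = [::].
Proof. by rewrite -(Ugeod (v:=star) (p:=[::])) // /geod /= eqxx. Qed.

Lemma Pcat v s1 s2 : P v = s1 ++ s2 -> P (lastv star s1) = s1.
Proof.
move=> e; have := geodP v; rewrite e => /geod_catl [g _].
by rewrite -(Ugeod g).
Qed.

Lemma memP v x : (x \in wverts star (P v)) = prefix (P x) (P v).
Proof.
apply/idP/prefixP.
  by case/mem_wverts_split=> s1 [s2 [e <-]]; exists s2; rewrite (Pcat e).
case=> s e; rewrite e wverts_cat mem_cat -{1}(P_last x) lastv_in //.
Qed.

Lemma prefix_antisym (s t : seq D) : prefix s t -> prefix t s -> s = t.
Proof.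
move=> /prefixP[a ->] /prefixP[b].
move/(congr1 size); rewrite !size_cat -addnA -{1}(addn0 (size s)) => /eqP.
by rewrite eqn_add2l eq_sym addn_eq0 => /andP[/eqP/size0nil -> _]; rewrite cats0.
Qed.

Fixpoint lcp (s t : seq D) : seq D :=
  match s, t with
  | x :: s', y :: t' => if x == y then x :: lcp s' t' else [::]
  | _, _ => [::]
  end.

Lemma prefix_lcp u s t : prefix u s && prefix u t = prefix u (lcp s t).
Proof.
elim: u s t => [|x u IH] [|y s] [|z t] //=; first by case: ifP.
  by rewrite andbF.
case: (eqVneq y z) => [<-|ne] /=; first by rewrite -IH; case: (x == y).
case: (eqVneq x y) => [->|] //=.
by rewrite (negbTE ne) andbF.
Qed.

Lemma lcp_split s t : exists r1 r2, [/\ s = lcp s t ++ r1, t = lcp s t ++ r2 &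
  (forall a b r1' r2', r1 = a :: r1' -> r2 = b :: r2' -> a != b)].
Proof.
elim: s t => [|x s IH] [|y t] /=.
- by exists [::], [::].
- by exists [::], (y :: t).
- by exists (x :: s), [::].
case: (eqVneq x y) => [<-|ne].
  case: (IH t) => r1 [r2 [e1 e2 H]]; exists r1, r2; split => //; congr (_ :: _) => //.
by exists (x :: s), (y :: t); split => // a b r1' r2' [<- _] [<- _].
Qed.

Lemma lab_walk_inj A a b b' s t : walk A a b s -> walk A a b' t ->
  map lab s = map lab t -> s = t.
Proof.
elim: s a t => [|d s IH] a [|d' t] //= /and3P[_ /eqP e1 w1] /and3P[_ /eqP e2 w2] [el em].
have ee := Hinj e1 e2 el; subst d'; congr (_ :: _); exact: IH w1 w2 em.
Qed.

Lemma nth_wverts a q i : i <= size q -> nth a (wverts a q) i = lastv a (take i q).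
Proof.
elim: q a i => [|d q IH] a [|i] //= hi.
rewrite (set_nth_default (de d)) /= ?size_map // -/(wverts (de d) q) IH //.
Qed.

Lemma Gstar m v q : geod T m v q -> prefix (P m) (P v) -> q = drop (h m) (P v).
Proof.
move=> gq pmv.
set Q := wverts m q.
pose J i := (i <= size q) && (nth m Q i \in wverts star (P m)).
have J0 : J 0 by rewrite /J /Q /= -[X in X \in _](P_last m) lastv_in.
have Jb : forall i, J i -> i <= size q by move=> i /andP[].
case: (ex_maxnP (ex_intro _ 0 J0) Jb) => i /andP[iq xin] imax.
set x := nth m Q i in xin.
have qs : q = take i q ++ drop i q by rewrite cat_take_drop.
have ex : lastv m (take i q) = x by rewrite /x /Q nth_wverts.
have [_ g2] : geod T m x (take i q) /\ geod T x v (drop i q).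
  by rewrite -ex; apply: geod_catl; rewrite -qs.
rewrite memP in xin; case/prefixP: xin => t Pm.
have gv : geod T star v (P x ++ drop i q).
  apply: (geod_catr (geodP x) g2) => y yin ym.
  have yPm : y \in wverts star (P m) by rewrite Pm wverts_cat mem_cat yin.
  rewrite map_drop in ym.
  set j := index y (drop i (map de q)).
  have jl : j < size (drop i (map de q)) by rewrite index_mem.
  rewrite size_drop size_map in jl.
  have : J (i + j).+1.
    rewrite /J; apply/andP; split; first by rewrite -ltn_subRL.
    by rewrite /Q /wverts /= -nth_drop nth_index.
  by move/imax; rewrite ltnNge leq_addr.
have ePv := Ugeod gv.
have xm : x = m.
  case: t Pm => [|a t] Pm; first by rewrite cats0 in Pm; exact: P_inj.
  exfalso.
  case/prefixP: pmv => s Pv.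
  have : drop (h x) (P v) = drop i q by rewrite -ePv /h drop_size_cat.
  rewrite Pv Pm -catA /h drop_size_cat // => ed.
  have mt : lastv x (a :: t) = m.
    by rewrite -(P_last x) -lastv_cat -Pm P_last.
  have : m \in map de (drop i q).
    rewrite -ed map_cat mem_cat -mt /lastv /= mem_last //.
  rewrite map_drop => /mem_drop mq.
  have u : uniq Q by case/andP: gq.
  by rewrite /Q /wverts /= mq in u.
have i0 : i = 0.
  have u : uniq Q by case/andP: gq.
  have sQ : size Q = (size q).+1 by rewrite /Q /wverts /= size_map.
  apply/eqP; rewrite -(nth_uniq m _ _ u) //; last by rewrite sQ ltnS.
  by rewrite -/x xm.
move: ePv; rewrite i0 drop0 xm => <-; rewrite /h drop_size_cat //.
Qed.

Local Notation vle := (vle V E src tgt T star lab).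

Lemma is_meet_iff v1 v2 w :
  is_meet V E src tgt T star v1 v2 w <-> P w = lcp (P v1) (P v2).
Proof.
split.
  case=> ds1 [ds2 [dsw [g1 g2 gw H]]].
  rewrite (Ugeod g1) (Ugeod g2) (Ugeod gw) in H.
  have H' x : prefix (P x) (lcp (P v1) (P v2)) = prefix (P x) (P w).
    by rewrite -prefix_lcp -!memP H memP.
  set L := lcp (P v1) (P v2) in H' *.
  have [r1 [r2 [e1 _ _]]] := lcp_split (P v1) (P v2).
  have PL : P (lastv star L) = L by apply: (Pcat e1).
  apply: (prefix_antisym); first by rewrite H' prefix_refl.
  by have := H' (lastv star L); rewrite PL prefix_refl => <-.
move=> Pw; exists (P v1), (P v2), (P w); split; try exact: geodP.
by move=> x; rewrite !memP prefix_lcp Pw.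
Qed.

Lemma gval_iff m v r k : P v = P m ++ r ->
  gval V E src tgt T lab m v k <-> (r = [::] /\ k = 0) \/ (exists a r', r = a :: r' /\ lab a = k).
Proof.
move=> Pv; split.
  case=> [[mv k0]|[d [ds [g l]]]].
    left; split => //; subst m; move/(congr1 size): Pv; rewrite size_cat.
    by rewrite -{1}(addn0 (size (P v))) => /eqP; rewrite eqn_add2l eq_sym => /eqP/size0nil.
  right; have := Gstar g; rewrite Pv prefix_prefix => /(_ isT).
  by rewrite /h drop_size_cat // => e; exists d, ds.
case=> [[r0 k0]|[a [r' [ra l]]]].
  by left; split => //; apply: (P_inj); rewrite Pv r0 cats0.
right; exists a, r'; split => //.
have := geodP v; rewrite Pv => /geod_catl [_]; rewrite P_last ra //.
Qed.

Lemma vle_lex v1 v2 : vle v1 v2 <-> lexle (map lab (P v1)) (map lab (P v2)).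
Proof.
have [r1 [r2 [e1 e2 Hd]]] := lcp_split (P v1) (P v2).
set L := lcp (P v1) (P v2) in e1 e2 Hd.
have PL : P (lastv star L) = L by apply: (Pcat e1).
set m := lastv star L in PL.
rewrite e1 e2 !map_cat lexle_cat.
have st1 a r : r1 = a :: r -> ds_ a = m.
  move=> ra; have := geodP v1; rewrite e1 ra => /geod_catl [_] /andP[/= /and3P[_ /eqP -> _] _].
  by [].
have st2 a r : r2 = a :: r -> ds_ a = m.
  move=> ra; have := geodP v2; rewrite e2 ra => /geod_catl [_] /andP[/= /and3P[_ /eqP -> _] _].
  by [].
have e1' : P v1 = P m ++ r1 by rewrite PL.
have e2' : P v2 = P m ++ r2 by rewrite PL.
split.
  case=> v3 [/is_meet_iff P3 H].
  have v3m : v3 = m by apply: (P_inj); rewrite P3 PL.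
  subst v3; case: H => [mv|[mv [k1 [k2 [g1 g2 lt]]]]].
    suff -> : r1 = [::] by [].
    by move/(congr1 size): e1'; rewrite -mv size_cat -{1}(addn0 (size _)) => /eqP; rewrite eqn_add2l eq_sym => /eqP/size0nil.
  case/(gval_iff _ e1'): g1 => [[r0 _]|[a [r' [ra la]]]].
    by exfalso; apply: mv; apply: (P_inj); rewrite e1' r0 cats0.
  case/(gval_iff _ e2'): g2 => [[_ k0]|[b [r'' [rb lb]]]]; first by rewrite k0 in lt.
  by rewrite ra rb /= la lb lt.
move=> lx; clear e1 e2; exists m; split; first by apply/is_meet_iff; rewrite PL.
case: r1 e1' st1 Hd lx => [|a r1'] e1' st1 Hd lx.
  by left; apply: (P_inj); rewrite e1' cats0.
case: r2 e2' st2 Hd lx => [|b r2'] e2' st2 Hd lx //.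
right; split.
  move=> mv; move/(congr1 size): e1'; rewrite mv size_cat /= addnS => /eqP.
  by rewrite -addnS -[X in X == _]addn0 eqn_add2l.
exists (lab a), (lab b); split.
- by apply/(gval_iff _ e1'); right; exists a, r1'.
- by apply/(gval_iff _ e2'); right; exists b, r2'.
have ab : lab a != lab b.
  apply/negP=> /eqP l; have := Hd a b r1' r2' erefl erefl.
  by rewrite (Hinj (st1 a r1' erefl) (st2 b r2' erefl) l) eqxx.
by move: lx => /= /orP[//|/andP[/eqP l _]]; rewrite l eqxx in ab.
Qed.

Lemma vle_refl v : vle v v.
Proof. by apply/vle_lex; apply: lexle_refl. Qed.

Lemma vle_trans a b c : vle a b -> vle b c -> vle a c.
Proof. move=> /vle_lex h1 /vle_lex h2; apply/vle_lex; exact: lexle_trans h1 h2. Qed.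

Lemma vle_total a b : vle a b \/ vle b a.
Proof.
case/orP: (lexle_total (map lab (P a)) (map lab (P b))) => H.
  by left; apply/vle_lex.
by right; apply/vle_lex.
Qed.

Lemma vle_antisym a b : vle a b -> vle b a -> a = b.
Proof.
move=> /vle_lex h1 /vle_lex h2; have e := lexle_antisym h1 h2.
apply: (P_inj).
have /andP[w1 _] := geodP a; have /andP[w2 _] := geodP b.
exact: (lab_walk_inj w1 w2 e).
Qed.

Local Notation ev := (ev V E src tgt T lab).
Local Notation cl := (cl V E src tgt).

Lemma ev_notstar y e : ev y e -> y != star.
Proof.
case=> d [dy l dT dE]; apply/negP => /eqP ys; rewrite ys in dy.
by rewrite (Hstar dy dT) in l.
Qed.

Lemma ev_cl y e : ev y e -> exists p, cl (inr e) = [set y; p] /\ h p < h y.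
Proof.
move=> H; have ns := ev_notstar H; case: H => d [dy l dT dE].
have g := geod_rf (geodP y).
case E1 : (rf (P y)) g => [|d' s] g.
  by case/andP: g => /= /eqP ys; rewrite ys eqxx in ns.
have l' := Hup ns g.
have dy' : ds_ d' = y by case/andP: g => /= /and3P[_ /eqP -> _].
have dd : d' = d by apply: (Hinj dy' dy); rewrite l l'.
subst d'.
have [_ gs] := @geod_catl _ _ src tgt T y star [:: d] s g.
have Pp := Ugeod (geod_rf gs).
exists (de d); split.
  rewrite /= -dE /lastv /=; move: dy; clear; case: d => f [] /= <-;
  by rewrite /dstart /dend /=; try rewrite setUC.
by rewrite /h -Pp size_rf -(size_rf (P y)) E1 /= /lastv /=.
Qed.

Lemma ev_inj y y' e : ev y e -> ev y' e -> y = y'.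
Proof.
move=> /ev_cl [p [c1 h1]] /ev_cl [p' [c2 h2]].
have : y \in [set y'; p'] by rewrite -c2 c1 !inE eqxx.
rewrite !inE => /orP[/eqP//|/eqP yp].
have : y' \in [set y; p] by rewrite -c1 c2 !inE eqxx.
rewrite !inE => /orP[/eqP//|/eqP yp'].
subst; move: (ltn_trans h1 h2); by rewrite ltnn.
Qed.

Lemma ev_fun y e e' : ev y e -> ev y e' -> e = e'.
Proof.
case=> d [dy l _ <-] [d' [dy' l' _ <-]].
by rewrite (Hinj dy dy'); rewrite ?l ?l'.
Qed.

Variable n : nat.
Local Notation cell := (is_cell V E src tgt n).
Local Notation unbl := (unblocked V E src tgt T star lab).
Local Notation princ := (principal V E src tgt T star lab).
Local Notation Wi := (Wi V E src tgt T star lab n).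
Local Notation W := (W V E src tgt T star lab n).
Local Notation elred := (elred V E).
Local Notation dim := (dim V E).
Local Notation X := (V + E)%type.

Definition swap (c : {set X}) (e : E) (y : V) : {set X} := (c :\ inr e) :|: [set inl y].

Lemma disjP (A B : {set V}) : reflect (forall z, z \in A -> z \in B -> False) [disjoint A & B].
Proof.
apply: (iffP idP) => [H z zA zB | H]; first by rewrite (disjointFr H zA) in zB.
apply/pred0P => z /=; apply/negP => /andP[zA zB]; exact: H z zA zB.
Qed.

Lemma eq_rr (a b : E) : (inr a == inr b :> X) = (a == b).
Proof. by apply/eqP/eqP => [[]|->]. Qed.
Lemma eq_ll (a b : V) : (inl a == inl b :> X) = (a == b).
Proof. by apply/eqP/eqP => [[]|->]. Qed.
Lemma eq_rl (a : E) (b : V) : (inr a == inl b :> X) = false.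
Proof. by apply/negP => /eqP. Qed.
Lemma eq_lr (a : V) (b : E) : (inl a == inr b :> X) = false.
Proof. by apply/negP => /eqP. Qed.

Lemma cl_inl v z
 : (z \in cl (inl v)) = (z == v).
Proof. by rewrite /= inE. Qed.

Lemma cl_inr_n0 e : src e \in cl (inr e).
Proof. by rewrite /= !inE eqxx. Qed.

Lemma cell_disj c x y : cell c -> x \in c -> y \in c -> x != y -> [disjoint cl x & cl y].
Proof. by case=> _ H; apply: H. Qed.

Lemma ev_in y e : ev y e -> y \in cl (inr e).
Proof. by case/ev_cl=> p [-> _]; rewrite !inE eqxx. Qed.

Lemma cell_vert_edge c y e : cell c -> inr e \in c -> y \in cl (inr e) -> inl y \in c -> False.
Proof.
move=> cc ec ye yc.
have := cell_disj cc ec yc isT => /disjP H; apply: (H y ye); by rewrite cl_inl.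
Qed.

Lemma unbl_notin c v e : unbl c v e -> inr e \notin c.
Proof.
case=> _ vc _ H; apply/negP => ec.
have := H _ ec isT => /disjP H'; exact: (H' _ (cl_inr_n0 e) (cl_inr_n0 e)).
Qed.

Lemma unbl_in c v e : unbl c v e -> inl v \in c.
Proof. by case. Qed.

Lemma unbl_ev c v e : unbl c v e -> ev v e.
Proof. by case. Qed.

Lemma unbl_disj c v e x : unbl c v e -> x \in c -> x != inl v -> [disjoint cl (inr e) & cl x].
Proof. by case=> _ _ _ H; apply: H. Qed.

Lemma swap_elred c v e : unbl c v e -> swap (elred c v e) e v = c.
Proof.
move=> u; have vc := unbl_in u; have ec := unbl_notin u.
apply/setP => x; rewrite !inE.
case: (eqVneq x (inl v)) => [->|xv] //=.
case: (eqVneq x (inr e)) => [->|xe] /=; first by rewrite (negbTE ec).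
by rewrite !orbF.
Qed.

Lemma elred_swap c y e : cell c -> inr e \in c -> ev y e -> elred (swap c e y) y e = c.
Proof.
move=> cc ec ye; apply/setP => x; rewrite !inE.
case: (eqVneq x (inr e)) => [->|xe] /=; first by rewrite ec.
case: (eqVneq x (inl y)) => [->|xy] /=; last by rewrite !orbF.
apply/esym/negP => yc; exact: (cell_vert_edge cc ec (ev_in ye) yc).
Qed.

Lemma card_swapU (A : {set X}) x y : x \in A -> y \notin A :\ x -> #|(A :\ x) :|: [set y]| = #|A|.
Proof.
move=> xA yA; rewrite setUC cardsU1 yA (cardsD1 x A) xA /=.
by rewrite add1n.
Qed.

Lemma edges_swap c e y : [set e' | inr e' \in swap c e y] = [set e' | inr e' \in c] :\ e.
Proof. by apply/setP => e'; rewrite !inE eq_rr eq_rl orbF. Qed.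

Lemma edges_elred c v e : [set e' | inr e' \in elred c v e] = e |: [set e' | inr e' \in c].
Proof. by apply/setP => e1; rewrite !inE eq_rr orbC. Qed.

Lemma swap_cell c e y : cell c -> inr e \in c -> ev y e ->
  [/\ cell (swap c e y), dim c = (dim (swap c e y)).+1 & unbl (swap c e y) y e].
Proof.
move=> cc ec ye.
have ync : inl y \notin c by apply/negP => yc; exact: (cell_vert_edge cc ec (ev_in ye) yc).
split.
- split.
    rewrite card_swapU //; first by case: cc.
    by rewrite inE negb_and ync orbT.
  move=> x z; rewrite !inE => /orP[/andP[xe xc]|/eqP->] /orP[/andP[ze zc]|/eqP->] xz.
  + exact: cell_disj cc xc zc xz.
  + apply: (disjointWr (B := cl (inr e))); first by apply/subsetP => w; rewrite cl_inl => /eqP->; exact: ev_in.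
    by rewrite disjoint_sym; apply: cell_disj cc ec xc _; rewrite eq_sym.
  + apply: (disjointWl (B := cl (inr e))); first by apply/subsetP => w; rewrite cl_inl => /eqP->; exact: ev_in.
    by apply: cell_disj cc ec zc _; rewrite eq_sym.
  + by rewrite eqxx in xz.
- rewrite /dim edges_swap (cardsD1 e) inE ec /= add1n.
  by congr (_.+1); congr #|_|; apply/setP => e'; rewrite !inE.
split.
- exact: ev_notstar ye.
- by rewrite !inE eqxx orbT.
- exact: ye.
move=> x; rewrite !inE => /orP[/andP[xe xc]|/eqP->]; last by rewrite eqxx.
by move=> _; apply: cell_disj cc ec xc _; rewrite eq_sym.
Qed.

Lemma elred_cell c v e : cell c -> unbl c v e ->
  [/\ cell (elred c v e), dim (elred c v e) = (dim c).+1, inr e \notin c & inl v \in c].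
Proof.
move=> cc u; have vc := unbl_in u; have ec := unbl_notin u.
split => //.
- split.
    rewrite card_swapU //; first by case: cc.
    by rewrite inE negb_and ec orbT.
  move=> x z; rewrite !inE => /orP[/andP[xe xc]|/eqP->] /orP[/andP[ze zc]|/eqP->] xz.
  + exact: cell_disj cc xc zc xz.
  + by rewrite disjoint_sym; apply: (unbl_disj u xc).
  + by apply: (unbl_disj u zc).
  + by rewrite eqxx in xz.
- rewrite /dim edges_elred cardsU1 inE ec add1n //.
Qed.

Lemma WiE i c c' : Wi i c c' <-> [/\ cell c, dim c = i, princ c c' &
   match i with 0 => True | j.+1 => ~ exists c0, Wi j c0 c end].
Proof. by case: i. Qed.

Lemma ev_noloop y e : ev y e -> src e != tgt e.
Proof.
case/ev_cl=> p [ce hp]; apply/negP => /eqP st.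
have yin : y \in cl (inr e) by rewrite ce !inE eqxx.
have pin : p \in cl (inr e) by rewrite ce !inE eqxx orbT.
rewrite /= -st setUid !inE in yin pin.
by move: hp; rewrite (eqP yin) (eqP pin) ltnn.
Qed.

Lemma reg_face c v e : cell c -> unbl c v e -> regular_face V E src tgt c (elred c v e).
Proof.
move=> cc u; have [cc' _ ec vc] := elred_cell cc u.
have nl := ev_noloop (unbl_ev u).
case: (unbl_ev u) => d0 [d0v l0 d0T d0e].
rewrite /regular_face; apply/eqP/cards1P; exists d0; apply/setP => d; rewrite !inE.
apply/andP/eqP.
  case=> d1c /eqP ce.
  have de1 : d.1 = e.
    apply/eqP; apply/negPn/negP => ne; move/negP: ec; apply.
    by rewrite ce /replace_by !inE eq_rr eq_rl eq_sym ne eqxx /= orbT.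
  have dv : ds_ d = v.
    have : inl v \in c by [].
    by rewrite ce /replace_by !inE !eq_lr !eq_ll eqxx /= => /eqP ->.
  move: d de1 dv d0 d0v d0e {l0 d0T d1c ce} nl => [f b] /= -> <- [f0 b0] /= H ef; subst f0.
  by case: b b0 H => [] [] //; rewrite /dstart /= => ->; rewrite eqxx.
move=> ->; split; first by rewrite d0e eqxx orbT.
by rewrite /replace_by d0e d0v -/(swap _ e v) swap_elred.
Qed.

Lemma vle_min (Q : V -> Prop) : (exists y, Q y) -> exists y, Q y /\ forall y', Q y' -> vle y y'.
Proof.
move=> [y0 Qy0].
suff H : forall s : seq V, (exists y, y \in s /\ Q y) ->
  exists y, Q y /\ forall y', y' \in s -> Q y' -> vle y y'.
  by case: (H (enum V)) => [|y [Qy Hy]]; [exists y0; rewrite mem_enum | exists y; split => // y' /Hy; apply; rewrite mem_enum].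
elim=> [|x s IH]; first by case=> y [].
move=> Hex.
case: (classic (exists y, y \in s /\ Q y)) => [/IH [y [Qy Hy]]|Hn].
  case: (classic (Q x)) => [Qx|nQx].
    case: (vle_total x y) => [xy|yx].
      exists x; split => // y'; rewrite inE => /orP[/eqP->|ys] Qy'; first exact: vle_refl.
      exact: vle_trans xy (Hy _ ys Qy').
    exists y; split => // y'; rewrite inE => /orP[/eqP->|ys] Qy' //; exact: Hy.
  exists y; split => // y'; rewrite inE => /orP[/eqP->|ys] Qy' //; exact: Hy.
case: Hex => y [ys Qy]; rewrite inE in ys.
case/orP: ys => [/eqP yx|ys]; last by exfalso; apply: Hn; exists y.
subst y; exists x; split => // y'; rewrite inE => /orP[/eqP->|ys] Qy'; first exact: vle_refl.
by exfalso; apply: Hn; exists y'.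
Qed.

Lemma transfer c e e' y y' u g : unbl (swap c e' y') u g -> inr e \in c -> e != e' -> ev y e ->
  unbl (swap (swap c e y) e' y') u g.
Proof.
case=> us uin uev udisj ec ne ye; split => //.
  move: uin; rewrite !inE !eq_lr /= => /orP[uc|/eqP->]; last by rewrite eqxx orbT.
  by rewrite uc /= ?orbT.
move=> x; rewrite !inE => /orP[/andP[xe' /orP[/andP[xe xc]|/eqP xy]]|/eqP xy'] xu.
- by apply: udisj => //; rewrite !inE xe' xc.
- subst x; apply: (disjointWr (B := cl (inr e))).
    by apply/subsetP => w; rewrite cl_inl => /eqP->; exact: ev_in.
  by apply: udisj; rewrite ?eq_rl // !inE eq_rr ne ec.
- by apply: udisj => //; rewrite !inE xy' eqxx orbT.
Qed.

Lemma unbl_swap2 c e e' y y' : cell c -> inr e \in c -> ev y e -> inr e' \in c -> e' != e -> ev y' e' ->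
  unbl (swap (swap c e y) e' y') y e.
Proof.
move=> cc ec ye e'c ne ye'; split.
- exact: ev_notstar ye.
- by rewrite !inE eqxx orbT andbT eq_lr.
- exact: ye.
move=> x; rewrite !inE => /orP[/andP[xe' /orP[/andP[xe xc]|/eqP xy]]|/eqP xy'] xu.
- by apply: cell_disj cc ec xc _; rewrite eq_sym.
- by rewrite xy eqxx in xu.
- subst x; apply: (disjointWr (B := cl (inr e'))).
    by apply/subsetP => w; rewrite cl_inl => /eqP->; exact: ev_in.
  by apply: cell_disj cc ec e'c _; rewrite eq_rr eq_sym.
Qed.

Lemma image_of k c : cell c -> dim c = k.+1 ->
  (exists y e, [/\ inr e \in c, ev y e & forall u g, unbl (swap c e y) u g -> vle y u]) ->
  exists c0, Wi k c0 c.
Proof.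
move=> cc dc Hex.
pose Q y := exists e, [/\ inr e \in c, ev y e & forall u g, unbl (swap c e y) u g -> vle y u].
have [y [[e [ec ye Hy]] ymin]] : exists y, Q y /\ forall y', Q y' -> vle y y'.
  by apply: vle_min; case: Hex => y [e H]; exists y, e.
have [sc sd su] := swap_cell cc ec ye.
exists (swap c e y); apply/WiE; split => //.
- by move: dc; rewrite sd => -[].
- by exists y, e; split => //; rewrite elred_swap.
case: k dc sd => [//|j] dc sd [c0 /WiE [c0c _ [y' [e' [u' m' ed]]] _]].
have e'd : inr e' \in swap c e y by rewrite ed !inE eqxx orbT.
have e'c : inr e' \in c by move: e'd; rewrite !inE eq_rl orbF => /andP[].
have ne : e' != e by move: e'd; rewrite !inE eq_rl orbF eq_rr => /andP[].
have c0E : c0 = swap (swap c e y) e' y' by rewrite ed swap_elred.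
have ye' := unbl_ev u'.
have Qy' : Q y'.
  exists e'; split => // u g ug; apply: (m' u g); rewrite c0E; apply: transfer => //.
  by rewrite eq_sym.
have l1 := ymin _ Qy'.
have l2 : vle y' y by apply: (m' y e); rewrite c0E; apply: unbl_swap2.
have yy := vle_antisym l1 l2; subst y'.
by rewrite (ev_fun ye ye') eqxx in ne.
Qed.

Lemma tri u g (A B : {set V}) : ev u g -> u \notin A -> u \notin B -> [disjoint A & B] ->
  ~~ [disjoint cl (inr g) & A] -> [disjoint cl (inr g) & B].
Proof.
case/ev_cl=> p [cg _] uA uB AB nd; rewrite cg in nd *.
apply/disjP => w wg wB; move/negP: nd; apply; apply/disjP => z zg zA.
have wp : w = p.
  by move: wg; rewrite !inE => /orP[/eqP wu|/eqP//]; subst w; rewrite wB in uB.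
have zp : z = p.
  by move: zg; rewrite !inE => /orP[/eqP zu|/eqP//]; subst z; rewrite zA in uA.
subst; exact: (disjP _ _ AB) p zA wB.
Qed.

Lemma W_data c c' : W c c' -> exists v e,
  [/\ cell c, unbl c v e, (forall w f, unbl c w f -> vle v w) & c' = elred c v e].
Proof. by rewrite /W => /WiE [cc _ [v [e [u m ce]]] _]; exists v, e. Qed.

Lemma W_notimg c c' k : W c c' -> dim c = k.+1 -> ~ exists c0, Wi k c0 c.
Proof. by rewrite /W => /WiE [_ _ _]; move=> + dc; rewrite dc. Qed.

Lemma dim_gt0 (c : {set X}) e : inr e \in c -> exists k, dim c = k.+1.
Proof.
move=> ec; have : 0 < dim c by apply/card_gt0P; exists e; rewrite inE.
by case: (dim c) => // k _; exists k.
Qed.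

Lemma mem_swap c e y x : (x \in swap c e y) = (x != inr e) && (x \in c) || (x == inl y).
Proof. by rewrite !inE. Qed.
Lemma mem_elred c v e x : (x \in elred c v e) = (x != inl v) && (x \in c) || (x == inr e).
Proof. by rewrite !inE. Qed.

Lemma W_inj_aux c1 c2 c' v1 e1 v2 e2 : W c1 c' ->
  cell c1 -> unbl c1 v1 e1 -> (forall w f, unbl c1 w f -> vle v1 w) -> c' = elred c1 v1 e1 ->
  cell c2 -> unbl c2 v2 e2 -> (forall w f, unbl c2 w f -> vle v2 w) -> c' = elred c2 v2 e2 ->
  vle v2 v1 -> v1 != v2 -> False.
Proof.
move=> W1 cc1 u1 m1 ce1 cc2 u2 m2 ce2 l nv.
have ne : e1 != e2.
  apply/negP => /eqP ee; subst e2; move/negP: nv; apply; apply/eqP.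
  exact: ev_inj (unbl_ev u1) (unbl_ev u2).
have cc' : cell c' by rewrite ce1; case: (elred_cell cc1 u1).
have e2c' : inr e2 \in c' by rewrite ce2 mem_elred eqxx orbT.
have e1c' : inr e1 \in c' by rewrite ce1 mem_elred eqxx orbT.
have e2c1 : inr e2 \in c1.
  by move: e2c'; rewrite ce1 mem_elred eq_rr [e2 == e1]eq_sym (negbTE ne) orbF => /andP[].
have c1E : c1 = swap c' e1 v1 by rewrite ce1 swap_elred.
have c2E : c2 = swap c' e2 v2 by rewrite ce2 swap_elred.
have [k dk] := dim_gt0 e2c1.
apply: (W_notimg W1 dk); apply: (image_of cc1 dk); exists v2, e2; split => //.
  exact: unbl_ev u2.
move=> u g [us uin uev udisj].
case: (eqVneq u v1) => [->//|uv1].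
case: (eqVneq u v2) => [->|uv2]; first exact: vle_refl.
have uc1 : inl u \in c1 by move: uin; rewrite mem_swap eq_ll (negbTE uv2) orbF => /andP[].
have uc' : inl u \in c' by move: uc1; rewrite c1E mem_swap eq_ll (negbTE uv1) orbF => /andP[].
case: (boolP [disjoint cl (inr g) & cl (inr e1)]) => dj.
  apply: (m2 u g); split => //; first by rewrite c2E mem_swap uc' eq_lr.
  move=> x; rewrite c2E mem_swap => /orP[/andP[xe2 xc']|/eqP->] xu.
    case: (eqVneq x (inr e1)) => [->//|xe1].
    by apply: udisj => //; rewrite mem_swap xe2 c1E mem_swap xe1 xc'.
  by apply: udisj => //; rewrite mem_swap eqxx orbT.
apply: vle_trans l _; apply: (m1 u g); split => //.
move=> x; rewrite c1E mem_swap => /orP[/andP[xe1 xc']|/eqP->] xu.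
  case: (eqVneq x (inr e2)) => [->|xe2].
    apply: (tri uev _ _ _ dj).
    - by apply/negP => h; exact: (cell_vert_edge cc' e1c' h uc').
    - by apply/negP => h; exact: (cell_vert_edge cc' e2c' h uc').
    - by apply: cell_disj cc' e1c' e2c' _; rewrite eq_rr.
  by apply: udisj => //; rewrite mem_swap xe2 c1E mem_swap xe1 xc'.
apply: udisj => //; rewrite mem_swap eq_lr (unbl_in u1) //.
Qed.

Lemma W_inj c1 c2 c' : W c1 c' -> W c2 c' -> c1 = c2.
Proof.
move=> W1 W2.
have [v1 [e1 [cc1 u1 m1 ce1]]] := W_data W1.
have [v2 [e2 [cc2 u2 m2 ce2]]] := W_data W2.
case: (eqVneq v1 v2) => [vv|nv].
  subst v2; have ee := ev_fun (unbl_ev u1) (unbl_ev u2); subst e2.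
  by rewrite -(swap_elred u1) -(swap_elred u2) -ce1 -ce2.
case: (vle_total v2 v1) => l.
  by exfalso; apply: (W_inj_aux W1 cc1 u1 m1 ce1 cc2 u2 m2 ce2 l nv).
by exfalso; apply: (W_inj_aux W2 cc2 u2 m2 ce2 cc1 u1 m1 ce1 l); rewrite eq_sym.
Qed.

Lemma Klem s t s' t' v e y f : cell s -> unbl s v e -> (forall w g, unbl s w g -> vle v w) ->
  t = elred s v e ->
  s' = (t :\ inr f) :|: [set inl y] -> ev y f -> f != e -> inr f \in s -> W s' t' ->
  forall v' e', unbl s' v' e' -> (forall w g, unbl s' w g -> vle v' w) -> ~ vle v v'.
Proof.
move=> cs us ms te s'e yf ne fs Ws' v' e' us' ms' l.
have [_ _ en vs] := elred_cell cs us.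
have ct : cell t by rewrite te; case: (elred_cell cs us).
have [v0 [e0 [cs' _ _ _]]] := W_data Ws'.
have ft : inr f \in t by rewrite te mem_elred fs eq_rl.
have et : inr e \in t by rewrite te mem_elred eqxx orbT.
have es' : inr e \in s' by rewrite s'e mem_swap et eq_rr eq_sym ne.
have uy : unbl s' y f.
  split => //; first exact: ev_notstar yf.
    by rewrite s'e mem_swap eqxx orbT.
  move=> x; rewrite s'e mem_swap => /orP[/andP[xf xt]|/eqP->] xy; last by rewrite eqxx in xy.
  by apply: cell_disj ct ft xt _; rewrite eq_sym.
have vy : vle v y := vle_trans l (ms' y f uy).
have [k dk] := dim_gt0 es'.
apply: (W_notimg Ws' dk); apply: (image_of cs' dk); exists v, e; split => //.
  exact: unbl_ev us.
move=> u g [us0 uin uev udisj].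
case: (eqVneq u y) => [->//|uy'].
case: (eqVneq u v) => [->|uv]; first exact: vle_refl.
have us'u : inl u \in s' by move: uin; rewrite mem_swap eq_ll (negbTE uv) orbF => /andP[].
have ut : inl u \in t by move: us'u; rewrite s'e mem_swap eq_ll (negbTE uy') orbF => /andP[].
have usu : inl u \in s by move: ut; rewrite te mem_elred eq_lr orbF => /andP[].
case: (boolP [disjoint cl (inr g) & cl (inr f)]) => dj.
  apply: (ms u g); split => //.
  move=> x xs xu.
  case: (eqVneq x (inl v)) => [->|xv].
    by apply: udisj; [rewrite mem_swap eqxx orbT | rewrite eq_ll eq_sym].
  case: (eqVneq x (inr f)) => [->//|xf].
  apply: udisj => //; rewrite mem_swap s'e mem_swap te mem_elred xv xs xf /=.
  case: (eqVneq x (inr e)) => [xe|//]; subst x; by rewrite xs in en.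
apply: vle_trans l _; apply: (ms' u g); split => //.
move=> x; rewrite s'e mem_swap => /orP[/andP[xf xt]|/eqP->] xu.
  case: (eqVneq x (inr e)) => [->|xe].
    apply: (tri uev _ _ _ dj).
    - by apply/negP => h; exact: (cell_vert_edge cs fs h usu).
    - apply/negP => h; have := unbl_disj us usu; rewrite eq_ll uv => /(_ isT) /disjP H.
      by apply: (H u h); rewrite cl_inl.
    - by rewrite disjoint_sym; apply: (unbl_disj us fs); rewrite eq_rl.
  by apply: udisj => //; rewrite mem_swap xe s'e mem_swap xf xt.
by apply: udisj => //; rewrite mem_swap eq_lr s'e mem_swap eqxx orbT.
Qed.

Lemma face_one s' t : face V E src tgt s' t -> dim t = (dim s').+1 ->
  exists f b, inr f \in t /\ s' = (t :\ inr f) :|: [set inl (ds_ (f, b))].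
Proof.
case=> S [b [St s'e]] dt.
have m1 e : ((inr e : X) \in [set (inr x : X) | x in S]) = (e \in S).
  apply/imsetP/idP => [[x xS [->]]//|eS]; by exists e.
have m2 e : ((inr e : X) \in [set (inl (ds_ (x, b x)) : X) | x in S]) = false.
  by apply/imsetP => -[x _].
have ed : [set e | inr e \in s'] = [set e | inr e \in t] :\: S.
  by apply/setP => e; rewrite s'e !inE m1 m2 orbF andbC.
have sub : S \subset [set e | inr e \in t] by apply/subsetP => e /St; rewrite inE.
have cS : #|S| = 1.
  move: dt; rewrite /dim ed cardsD (setIidPr sub).
  have := subset_leq_card sub; lia.
case/cards1P: (introT eqP cS) => f Sf.
exists f, (b f); split; first by apply: St; rewrite Sf inE.
by rewrite s'e Sf !imset_set1.
Qed.

Definition evb y e := [exists d : D, [&& ds_ d == y, lab d == 0, d.1 \in T & d.1 == e]].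
Lemma evP y e : reflect (ev y e) (evb y e).
Proof.
apply: (iffP existsP) => [[d /and4P[/eqP a /eqP b c /eqP d']]|[d [a b c d']]].
  by exists d.
by exists d; rewrite a b c d' !eqxx.
Qed.
Definition good e := [exists y, evb y e].
Definition phi (x : X) : nat :=
  match x with inl v => (h v).*2 | inr e => (maxn (h (src e)) (h (tgt e))).*2 + ~~ good e end.
Definition Phi (c : {set X}) := \sum_(x in c) phi x.

Lemma PhiD1 (A : {set X}) x : x \in A -> Phi A = phi x + Phi (A :\ x).
Proof.
move=> xA; rewrite /Phi (bigD1 x) //=; congr (_ + _).
by apply: eq_bigl => z; rewrite !inE andbC.
Qed.

Lemma PhiU1 (A : {set X}) x : x \notin A -> Phi (A :|: [set x]) = phi x + Phi A.
Proof.
move=> xA; rewrite (PhiD1 (x := x)); last by rewrite !inE eqxx orbT.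
congr (_ + _); congr Phi; apply/setP => z; rewrite !inE.
by case: (eqVneq z x) => [->|] /=; [rewrite (negbTE xA) | rewrite orbF].
Qed.

Lemma phi_ev y e : ev y e -> phi (inr e) = (h y).*2.
Proof.
move=> ye; have g : good e by apply/existsP; exists y; apply/evP.
case/ev_cl: ye => p [ce hp]; rewrite /= g addn0.
have si : src e \in [set y; p] by rewrite -ce /= !inE eqxx.
have ti : tgt e \in [set y; p] by rewrite -ce /= !inE eqxx orbT.
have yi : y \in cl (inr e) by rewrite ce !inE eqxx.
congr (_.*2); rewrite /= !inE in si ti yi.
case/orP: si => /eqP es; case/orP: ti => /eqP et; rewrite es et ?maxnn //.
- by apply/maxn_idPl; apply: ltnW.
- by apply/maxn_idPr; apply: ltnW.
- by move: yi; rewrite es et orbb => /eqP yp; rewrite yp ltnn in hp.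
Qed.

Lemma phi_end f z : z \in cl (inr f) -> (h z).*2 <= phi (inr f).
Proof.
move=> zf; rewrite /phi; apply: leq_trans (leq_addr _ _); rewrite leq_double.
by move: zf; rewrite /= !inE => /orP[] /eqP->; [exact: leq_maxl | exact: leq_maxr].
Qed.

Lemma phi_eq f z : z \in cl (inr f) -> phi (inr f) = (h z).*2 -> exists y, ev y f /\ z = y.
Proof.
move=> zf eq; case g : (good f).
  case/existsP: g => y /evP yf; exists y; split => //.
  have := phi_ev yf; rewrite eq => hz'; have hz : h z = h y by rewrite -!muln2 in hz'; lia.
  case/ev_cl: yf zf => p [-> hp]; rewrite !inE => /orP[/eqP//|/eqP zp].
  by subst z; rewrite -hz ltnn in hp.
move: eq; rewrite /= g /= => /(congr1 odd); by rewrite addn1 /= !odd_double.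
Qed.

Lemma step s t s' : W s t -> face V E src tgt s' t -> dim s' = dim s -> s' <> s ->
  Phi s' <= Phi s /\
  (Phi s' = Phi s -> exists v e y f, [/\ unbl s v e, (forall w g, unbl s w g -> vle v w),
      t = elred s v e, s' = (t :\ inr f) :|: [set inl y] & [/\ ev y f, f != e & inr f \in s]]).
Proof.
move=> Ws fc ds ns.
have [v [e [cc u m te]]] := W_data Ws.
have [_ dt en vs] := elred_cell cc u.
have ct : cell t by rewrite te; case: (elred_cell cc u).
have dt' : dim t = (dim s').+1 by rewrite te dt ds.
have [f [b [ft s'e]]] := face_one fc dt'.
set z := ds_ (f, b) in s'e.
have zf : z \in cl (inr f) by rewrite /z /dstart; case: (b); rewrite /= !inE eqxx ?orbT.
have zn : inl z \notin t :\ inr f.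
  by rewrite !inE eq_lr /=; apply/negP => zt; exact: (cell_vert_edge ct ft zf zt).
have Pt : Phi t = Phi s.
  rewrite (PhiD1 vs) te PhiU1; last by rewrite !inE eq_rl /= en.
  by rewrite (phi_ev (unbl_ev u)).
have Pt2 : Phi t = phi (inr f) + Phi (t :\ inr f) by apply: PhiD1.
have Ps' : Phi s' = (h z).*2 + Phi (t :\ inr f) by rewrite s'e PhiU1.
split; first by rewrite -Pt Pt2 Ps' leq_add2r phi_end.
move=> eq; have : phi (inr f) = (h z).*2.
  by apply/eqP; rewrite -(eqn_add2r (Phi (t :\ inr f))) -Pt2 -Ps' Pt eq.
case/(phi_eq zf) => y [yf zy].
exists v, e, y, f; split => //; first by rewrite s'e zy.
have fe : f != e.
  apply/negP => /eqP fe; subst f; apply: ns.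
  have yv := ev_inj yf (unbl_ev u); subst y.
  by rewrite s'e yv -/(swap t e v) te swap_elred.
split => //.
by move: ft; rewrite te mem_elred eq_rr (negbTE fe) eq_rl orbF.
Qed.

Definition pvtx c v := exists e, unbl c v e /\ forall w g, unbl c w g -> vle v w.

Lemma pvtx_uniq c v v' : pvtx c v -> pvtx c v' -> v = v'.
Proof.
case=> e [u m] [e' [u' m']]; apply: vle_antisym; [exact: m u' | exact: m' u].
Qed.

Lemma W_pvtx c t : W c t -> exists v, pvtx c v.
Proof. by case/W_data=> v [e [_ u m _]]; exists v, e. Qed.

Lemma nat_const (a : nat -> nat) r : (forall i, i < r -> a i.+1 <= a i) -> a r = a 0 ->
  forall i, i < r -> a i.+1 = a i.
Proof.
move=> H ar.
have up : forall i, i <= r -> a i <= a 0.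
  elim=> [//|i IH] ir; apply: leq_trans (H _ ir) (IH (ltnW ir)).
have dn : forall k, k <= r -> a r <= a (r - k).
  elim=> [|k IH] kr; first by rewrite subn0.
  apply: leq_trans (IH (ltnW kr)) _.
  have -> : r - k = (r - k.+1).+1 by rewrite subnSK.
  by apply: H; rewrite subnSK // leq_subr.
move=> i ir; apply/eqP; rewrite eqn_leq H //=.
have := dn (r - i.+1) (leq_subr _ _); rewrite subKn //.
move=> h1; apply: leq_trans (up _ (ltnW ir)) _; by rewrite -ar.
Qed.

Lemma no_path : ~ nonstat_closed_path V E src tgt n W.
Proof.
case=> p [r [s [r0 cells er e1 steps]]].
have nst : forall i, i < r -> exists t, [/\ W (s i) t, s i.+1 <> s i & face V E src tgt (s i.+1) t].
  move=> i ir; case: (steps i ir) => [[noW ei]|//].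
  exfalso.
  have all : forall k, i + k <= r -> s (i + k) = s i.
    elim=> [|k IH] ik; first by rewrite addn0.
    have ik' : i + k < r by rewrite addnS in ik.
    rewrite addnS; case: (steps _ ik') => [[_ ->]|[t [Wt _ _]]]; first by rewrite (IH (ltnW ik')).
    by rewrite (IH (ltnW ik')) in Wt; case: (noW t).
  have sr : s r = s i by have := all (r - i); rewrite subnKC ?(ltnW ir) //; apply.
  case: (steps 0 r0) => [[_ e0]|[t [Wt _ _]]]; first by apply: e1.
  by rewrite -er sr in Wt; case: (noW t).
have hasW : forall i, i <= r -> exists t, W (s i) t.
  move=> i; rewrite leq_eqVlt => /orP[/eqP->|ir].
    by rewrite er; case: (nst 0 r0) => t [Wt _ _]; exists t.
  by case: (nst i ir) => t [Wt _ _]; exists t.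
have hasP : forall i, i <= r -> exists v, pvtx (s i) v.
  by move=> i /hasW [t /W_pvtx].
have mono : forall i, i < r -> Phi (s i.+1) <= Phi (s i).
  move=> i ir; case: (nst i ir) => t [Wt ne fc].
  have [[_ d1] [_ d2]] := (cells _ ir, cells _ (ltnW ir)).
  by case: (step Wt fc (etrans d1 (esym d2)) ne).
have cst := nat_const mono (congr1 Phi er).
have Kst : forall i, i < r -> forall v v', pvtx (s i) v -> pvtx (s i.+1) v' -> ~ vle v v'.
  move=> i ir v v' pv pv'.
  case: (nst i ir) => t [Wt ne fc].
  have [[_ d1] [_ d2]] := (cells _ ir, cells _ (ltnW ir)).
  have [_ /(_ (cst _ ir))] := step Wt fc (etrans d1 (esym d2)) ne.
  case=> v0 [e0 [y [f [u0 m0 te s'e [yf fe fs]]]]].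
  have vv : v0 = v by apply: pvtx_uniq pv; exists e0.
  subst v0.
  have [t' Wt'] := hasW _ ir.
  case: pv' => e' [u' m'].
  have [cs _] : cell (s i) /\ True.
    by split => //; case/W_data: Wt => ? [? []].
  exact: (Klem cs u0 m0 te s'e yf fe fs Wt' u' m').
have chain : forall k, 0 < k -> k <= r -> forall w w1, pvtx (s k) w -> pvtx (s 1) w1 -> vle w w1.
  elim=> [//|k IH] _ kr w w1 pw pw1.
  case: k IH kr pw => [|k] IH kr pw.
    by rewrite (pvtx_uniq pw pw1); apply: vle_refl.
  have [w' pw'] := hasP _ (ltnW kr).
  have := Kst _ kr _ _ pw' pw.
  case: (vle_total w w') => [l _|l /(_ l)//].
  exact: vle_trans l (IH isT (ltnW kr) _ _ pw' pw1).
have [w0 p0] := hasP 0 (leq0n _).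
have [w1 p1] := hasP 1 r0.
apply: (Kst 0 r0 _ _ p0 p1).
by apply: chain r0 (leqnn r) _ _ _ p1; rewrite er.
Qed.

Lemma W_dgvf : dgvf V E src tgt n W.
Proof.
split.
- move=> c c' Wc; have [v [e [cc u m ce]]] := W_data Wc.
  have [cc' dc _ _] := elred_cell cc u.
  by rewrite ce; split => //; apply: reg_face.
- move=> c c1 c2 W1 W2.
  have [v1 [e1 [cc u1 m1 ->]]] := W_data W1.
  have [v2 [e2 [_ u2 m2 ->]]] := W_data W2.
  have vv : v1 = v2 by apply: vle_antisym; [exact: m1 u2 | exact: m2 u1].
  subst v2; by rewrite (ev_fun (unbl_ev u1) (unbl_ev u2)).
- move=> c1 c2 c' W1 W2; exact: W_inj W1 W2.
- move=> a b c Wab Wbc.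
  have [v [e [ca u _ be]]] := W_data Wab.
  have [_ db _ _] := elred_cell ca u.
  rewrite -be in db.
  by apply: (W_notimg Wbc db); exists a.
exact: no_path.
Qed.

End Tree.

Theorem mainTheorem9 (V E : finType) (src tgt : E -> V) (T : {set E}) (star : V)
    (lab : E * bool -> nat) (n : nat) :
  0 < n ->
  connected V E src tgt [set: E] ->
  spanning_tree V E src tgt T ->
  #|[set d : E * bool | (dstart V E src tgt d == star) && (d.1 \in T)]| = 1 ->
  valid_lab V E src tgt T star lab ->
  ~ nonstat_closed_path V E src tgt n (W V E src tgt T star lab n) /\
  dgvf V E src tgt n (W V E src tgt T star lab n).
Proof.
move=> _ _ [Tc _] _ Hl; split; [exact: (no_path Tc Hl) | exact: (W_dgvf Tc Hl n)].
Qed.
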